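(* Let $n$ be a positive integer and let $\lambda=(\lambda_1\ge\lambda_2\ge\cdots)$ be an integer partition. Then $c_n(c_n(\lambda))=\lambda$ if and only if for every integer $k\ge 0$ there is at most one index $i$ with $kn<\lambda_i<(k+1)n$.
   Context: For a partition $\lambda$, let $\lambda'_j=\#\{t:\lambda_t\ge j\}$ be the length of the $j$-th column of its Young shape ($j\ge1$). For a positive integer $n$, $c_n(\lambda)$ is the partition $\mu=(\mu_1,\mu_2,\dots,\mu_k)$ (of the same size as $\lambda$, zero parts omitted) with $\mu_i=\sum_{j=(i-1)n+1}^{in}\lambda'_j$, i.e. $\mu_i$ is the total number of cells in columns $(i-1)n+1,\dots,in$ of $\lambda$. For example $c_3((7,6,6,6,4,3,3,1))=(22,13,1)$, and $c_1$ is conjugation. *)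

(* Defs.v *)
From mathcomp Require Import all_boot.
Set Implicit Arguments. Unset Strict Implicit. Unset Printing Implicit Defensive.

Definition is_partition (l : seq nat) : bool :=
  sorted geq l && all (fun x => 0 < x) l.

Definition conj_part (l : seq nat) (j : nat) : nat :=
  count (fun t => j <= t) l.

(* c_n(lambda): mu_i = sum_{j=(i-1)n+1}^{in} lambda'_j  (i >= 1), zero parts
   omitted.  Since n >= 1, mu_i = 0 once (i-1)n >= lambda_1, so it suffices
   to compute mu_1, ..., mu_{lambda_1} (lambda_1 = head 0 l) and drop zeros. *)
Definition c (n : nat) (l : seq nat) : seq nat :=
  filter (fun x => 0 < x)
    (mkseq (fun i => \sum_(i * n + 1 <= j < i * n + n + 1) conj_part l j) (head 0 l)).

Example c3_example : c 3 [:: 7; 6; 6; 6; 4; 3; 3; 1] = [:: 22; 13; 1].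
Proof. by rewrite /c /conj_part /mkseq /= !unlock. Qed.
Example c1_conj : c 1 [:: 3; 1] = [:: 2; 1; 1].
Proof. by rewrite /c /conj_part /mkseq /= !unlock. Qed.

(* Main.v *)
Require Import Defs.
From mathcomp Require Import all_boot zify.

Definition mm (n : nat) (l : seq nat) (i : nat) := \sum_(t <- l) minn (t - i * n) n.

Lemma count_sum (T : Type) (p : pred T) (s : seq T) :
  count p s = \sum_(t <- s) (p t : nat).
Proof. elim: s => [|x s IH]; by rewrite ?big_nil ?big_cons //= IH. Qed.

Lemma cnt_range a m t : \sum_(a <= j < a + m) (j <= t : nat) = minn (t.+1 - a) m.
Proof.
elim: m => [|m IH]; first by rewrite addn0 big_geq //; lia.
rewrite addnS big_nat_recr /=; last by lia.
rewrite IH; case: leqP => H /=; lia.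
Qed.

Lemma block_mm n l i :
  \sum_(i * n + 1 <= j < i * n + n + 1) conj_part l j = mm n l i.
Proof.
rewrite /conj_part /mm.
under eq_bigr => j _ do rewrite count_sum.
rewrite exchange_big /=; apply: eq_bigr => t _.
have -> : i * n + n + 1 = (i * n + 1) + n by lia.
rewrite cnt_range; lia.
Qed.

Lemma mkseq_cons (f : nat -> nat) N : mkseq f N.+1 = f 0 :: mkseq (fun i => f i.+1) N.
Proof.
rewrite /mkseq /= -[1]addn0 iotaDl -map_comp; congr (_ :: _); apply: eq_map => x /=.
Qed.

Lemma filt_nth N : forall f : nat -> nat, (forall i j, i <= j -> f j <= f i) ->
  (forall i, N <= i -> f i = 0) ->
  forall i, nth 0 (filter (fun x => 0 < x) (mkseq f N)) i = f i.
Proof.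
elim: N => [|N IH] f Hm Hz i.
  by rewrite /= nth_nil Hz.
rewrite mkseq_cons /=.
case: (posnP (f 0)) => H0 /=.
  have Hall : forall j, f j = 0 by move=> j; have := Hm 0 j (leq0n j); lia.
  rewrite Hall; set s := filter _ _.
  have -> : s = [::].
    rewrite /s; apply/eqP; rewrite -[_ == _]negbK -has_filter; apply/hasP => -[x].
    by move=> /mapP [y _ ->]; rewrite Hall.
  by rewrite nth_nil.
case: i => [|i] //=.
apply: (IH (fun i => f i.+1)) => [a b Hab|a Ha]; [apply: Hm | apply: Hz]; lia.
Qed.

Lemma filt_sorted N (f : nat -> nat) : (forall i j, i <= j -> f j <= f i) ->
  sorted geq (filter (fun x => 0 < x) (mkseq f N)).
Proof.
move=> Hm; apply: sorted_filter; first by move=> a b d; rewrite /geq => ? ?; lia.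
rewrite /mkseq; apply: (homo_sorted (e := leq)); last by apply: iota_sorted.
by move=> x y; apply: Hm.
Qed.

Lemma part_le_head l x : is_partition l -> x \in l -> x <= head 0 l.
Proof.
case: l => [|h s] //= /andP [Hs _]; rewrite inE => /orP [/eqP -> //|Hx].
move: Hs; rewrite /= path_sortedE; last by move=> a b d; rewrite /geq => ? ?; lia.
by move=> /andP [/allP /(_ x Hx)].
Qed.

Lemma part_nth_mono l i j : is_partition l -> i <= j -> nth 0 l j <= nth 0 l i.
Proof.
move=> /andP [Hs _] Hij.
case: (ltnP j (size l)) => Hj; last by rewrite nth_default.
have Htr : transitive geq by move=> y x z H1 H2; exact: leq_trans H2 H1.
have Hrf : reflexive geq by move=> a; exact: leqnn.
have H := @sorted_leq_nth nat geq Htr Hrf 0 l Hs i j.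
apply: H => //; rewrite inE; lia.
Qed.

Lemma mm_mono n l i j : i <= j -> mm n l j <= mm n l i.
Proof.
move=> Hij; apply: leq_sum => t _.
have : i * n <= j * n by rewrite leq_mul2r Hij orbT.
lia.
Qed.

Lemma mm_zero n l i : 0 < n -> is_partition l -> head 0 l <= i -> mm n l i = 0.
Proof.
move=> Hn Hl Hi; apply: big1_seq => t /andP [_ Ht].
have := part_le_head _ _ Hl Ht.
have : i <= i * n by rewrite leq_pmulr.
lia.
Qed.

Lemma c_nth n l : 0 < n -> is_partition l -> forall i, nth 0 (c n l) i = mm n l i.
Proof.
move=> Hn Hl i; rewrite /c.
under eq_mkseq => k do rewrite block_mm.
apply: filt_nth => [a b|a]; [apply: mm_mono | apply: mm_zero].
by [].
by [].
Qed.

Lemma c_part n l : 0 < n -> is_partition l -> is_partition (c n l).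
Proof.
move=> Hn Hl; rewrite /is_partition /c.
under eq_mkseq => k do rewrite block_mm.
rewrite filt_sorted /=; last by move=> a b; apply: mm_mono.
by apply/allP => x; rewrite mem_filter => /andP [].
Qed.

Lemma size_c n l : size (c n l) <= head 0 l.
Proof. by rewrite /c size_filter (leq_trans (count_size _ _)) // size_mkseq. Qed.

Lemma ext_sum (F : nat -> nat) s B : size s <= B -> F 0 = 0 ->
  \sum_(t <- s) F t = \sum_(0 <= k < B) F (nth 0 s k).
Proof.
move=> HB H0; rewrite (big_nth 0) [RHS](big_cat_nat _ (n := size s)) //=.
rewrite [X in _ + X]big1_seq ?addn0 // => k /andP [_]; rewrite mem_index_iota => /andP [Hk _].
by rewrite nth_default.
Qed.

Lemma mm_nth n l i B : size l <= B ->
  mm n l i = \sum_(0 <= s < B) minn (nth 0 l s - i * n) n.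
Proof. move=> HB; rewrite /mm (@ext_sum (fun t => minn (t - i * n) n) l B) //; lia. Qed.

Lemma sum_min t n h : \sum_(0 <= k < h) minn (t - k * n) n = minn t (h * n).
Proof.
elim: h => [|h IH]; first by rewrite big_geq // mul0n; lia.
rewrite big_nat_recr //= IH mulSn.
set X := h * n; lia.
Qed.

Lemma sumn_c n l : 0 < n -> is_partition l -> sumn (c n l) = sumn l.
Proof.
move=> Hn Hl.
rewrite !sumnE (@ext_sum id _ (head 0 l)) ?size_c //.
under eq_bigr => k _ do rewrite c_nth //.
rewrite /mm exchange_big /=; apply: eq_big_seq => t Ht.
rewrite sum_min.
have := part_le_head _ _ Hl Ht.
have : head 0 l <= head 0 l * n by rewrite leq_pmulr.
lia.
Qed.

Lemma pos_eq (s1 s2 : seq nat) : all (fun x => 0 < x) s1 -> all (fun x => 0 < x) s2 ->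
  (forall i, nth 0 s1 i = nth 0 s2 i) -> s1 = s2.
Proof.
elim: s1 s2 => [|x s1 IH] [|y s2] //=.
- by move=> _ /andP [Hy _] /(_ 0) /= H; rewrite -H in Hy.
- by move=> /andP [Hx _] _ /(_ 0) /= H; rewrite H in Hx.
- move=> /andP [_ H1] /andP [_ H2] H; have /= -> := H 0; congr (_ :: _).
  by apply: IH => // i; apply: (H i.+1).
Qed.

Lemma count_two (p : pred nat) s : 1 < count p s ->
  exists i j, [/\ i < j, j < size s, p (nth 0 s i) & p (nth 0 s j)].
Proof.
elim: s => [|x s IH] //=.
case Hx: (p x) => /= H.
  have Hh : has p s by rewrite has_count; lia.
  exists 0, (find p s).+1; split => //=.
    by rewrite ltnS -has_find.
  exact: nth_find.
have [i [j [H1 H2 H3 H4]]] := IH H.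
by exists i.+1, j.+1.
Qed.

Lemma two_count (p : pred nat) s i j : i < j -> j < size s ->
  p (nth 0 s i) -> p (nth 0 s j) -> 1 < count p s.
Proof.
elim: s i j => [|x s IH] i j //= Hij Hj.
case: i Hij => [|i] Hij /=.
  case: j Hij Hj => [|j] // _ Hj Hx Hpj; rewrite Hx.
  have : 0 < count p s by rewrite -has_count; apply/hasP; exists (nth 0 s j) => //; apply: mem_nth.
  lia.
case: j Hij Hj => [|j] // Hij Hj Hpi Hpj.
have := IH i j Hij Hj Hpi Hpj; lia.
Qed.

Lemma sumn_nth s B : size s <= B -> sumn s = \sum_(0 <= j < B) nth 0 s j.
Proof. by move=> HB; rewrite sumnE (@ext_sum id _ B). Qed.

Lemma pt_le (F : nat -> nat) a b t : a <= t < b -> F t <= \sum_(a <= s < b) F s.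
Proof.
move=> /andP [H1 H2].
rewrite (big_cat_nat _ (n := t)) //; last by lia.
rewrite (big_cat_nat _ (m := t) (n := t.+1)) //= big_nat1; lia.
Qed.

Lemma nth_le_head l s : is_partition l -> nth 0 l s <= head 0 l.
Proof.
move=> Hl; case: (ltnP s (size l)) => Hs; last by rewrite nth_default.
by apply: part_le_head => //; apply: mem_nth.
Qed.

Lemma ps n l k j :
  (forall s, s < j -> k.+1 * n <= nth 0 l s) ->
  j * n + minn (nth 0 l j - k * n) n <= \sum_(0 <= i < j.+1) minn (nth 0 l i - k * n) n.
Proof.
move=> Hs; rewrite big_nat_recr //=.
have -> : \sum_(0 <= i < j) minn (nth 0 l i - k * n) n = \sum_(0 <= i < j) n.
  apply: eq_big_nat => s Hs'; have := Hs s (proj2 (andP Hs')).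
  rewrite mulSn; set X := k * n; lia.
rewrite sum_nat_const_nat subn0; lia.
Qed.

Lemma lb2 n l k j : j < size l ->
  (forall s, s < j -> k.+1 * n <= nth 0 l s) ->
  j * n + minn (nth 0 l j - k * n) n <= mm n l k.
Proof.
move=> Hj Hs; rewrite (mm_nth n l k (size l)) //.
rewrite (big_cat_nat _ (n := j.+1)) //=.
exact: leq_trans (ps n l k j Hs) (leq_addr _ _).
Qed.

Lemma lb1 n l k j : is_partition l -> j < size l -> k.+1 * n <= nth 0 l j ->
  j.+1 * n <= mm n l k.
Proof.
move=> Hl Hj Hk.
have := @lb2 n l k j Hj (fun s Hs => leq_trans Hk (part_nth_mono _ _ _ Hl (ltnW Hs))).
move: Hk; rewrite !mulSn; set X := k * n; set Y := j * n; lia.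
Qed.

Lemma lb3 n l k j t : j < t -> t < size l ->
  (forall s, s < j -> k.+1 * n <= nth 0 l s) ->
  j * n + minn (nth 0 l j - k * n) n + minn (nth 0 l t - k * n) n <= mm n l k.
Proof.
move=> Hjt Ht Hs; rewrite (mm_nth n l k (size l)) //.
rewrite (big_cat_nat _ (n := j.+1)) //=; last by lia.
apply: leq_add; first exact: ps.
apply: (pt_le (fun i => minn (nth 0 l i - k * n) n)); lia.
Qed.

Lemma split3 (F : nat -> nat) j B : j < B ->
  \sum_(0 <= i < B) F i = \sum_(0 <= i < j) F i + F j + \sum_(j.+1 <= i < B) F i.
Proof.
move=> HB; rewrite (big_cat_nat _ (n := j.+1)) //= big_nat_recr //.
Qed.

Lemma ge_sum_eq s1 s2 : (forall j, nth 0 s2 j <= nth 0 s1 j) -> sumn s1 = sumn s2 ->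
  forall j, nth 0 s1 j = nth 0 s2 j.
Proof.
move=> Hle Hs j; apply/eqP; rewrite eqn_leq Hle andbT leqNgt; apply/negP => Hlt.
pose B := size s1 + size s2 + j.+1.
have HB : j < B by rewrite /B leq_addl.
have HB1 : size s1 <= B by rewrite /B -addnA; apply: leq_addr.
have HB2 : size s2 <= B by rewrite /B (addnC (size s1)) -addnA; apply: leq_addr.
rewrite (sumn_nth s1 B HB1) (sumn_nth s2 B HB2) in Hs.
rewrite (split3 (nth 0 s1) j B HB) (split3 (nth 0 s2) j B HB) in Hs.
have H1 : \sum_(0 <= i < j) nth 0 s2 i <= \sum_(0 <= i < j) nth 0 s1 i by apply: leq_sum.
have H2 : \sum_(j.+1 <= i < B) nth 0 s2 i <= \sum_(j.+1 <= i < B) nth 0 s1 i by apply: leq_sum.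
move: Hs H1 H2 Hlt.
move: (\sum_(0 <= i < j) nth 0 s2 i) (\sum_(0 <= i < j) nth 0 s1 i) (\sum_(j.+1 <= i < B) nth 0 s2 i) (\sum_(j.+1 <= i < B) nth 0 s1 i) (nth 0 s1 j) (nth 0 s2 j).
move=> a b c d e f; lia.
Qed.

Theorem mainTheorem2 (n : nat) (l : seq nat) :
  0 < n -> is_partition l ->
  (c n (c n l) = l <->
   forall k : nat, count (fun x => (k * n < x) && (x < k.+1 * n)) l <= 1).
Proof.
move=> Hn Hl.
have Hc := c_part n l Hn Hl.
set B := (head 0 l).+1.
have Hnu : forall j, nth 0 (c n (c n l)) j = \sum_(0 <= k < B) minn (mm n l k - j * n) n.
  move=> j; rewrite c_nth // (mm_nth n (c n l) j B); last by apply: leqW; apply: size_c.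
  by apply: eq_bigr => k _; rewrite c_nth.
have LB : forall j q, q <= head 0 l -> (forall k, k < q -> j.+1 * n <= mm n l k) ->
    q * n + minn (mm n l q - j * n) n <= nth 0 (c n (c n l)) j.
  move=> j q Hq Hk; rewrite Hnu (split3 _ q B) //.
  have -> : \sum_(0 <= i < q) minn (mm n l i - j * n) n = \sum_(0 <= i < q) n.
    apply: eq_big_nat => s /andP [_ Hs]; have := Hk s Hs.
    rewrite mulSn; set X := j * n; lia.
  rewrite sum_nat_const_nat subn0; lia.
split.
- move=> Heq k; rewrite leqNgt; apply/negP => /count_two [i [j [Hij Hj Hpi Hpj]]].
  pose P := (fun x => (k * n < x) && (x < k.+1 * n)).
  have HPi : P (nth 0 l i) := Hpi.
  have HPj : P (nth 0 l j) := Hpj.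
  clear Hpi Hpj.
  have Hhas : has P l.
    apply/hasP; exists (nth 0 l i) => //; apply: mem_nth.
    exact: ltn_trans Hij Hj.
  set a := find P l.
  have Hai : a <= i.
    rewrite leqNgt; apply/negP => Hia; by rewrite (before_find 0 Hia) in HPi.
  have Hpa : P (nth 0 l a) by apply: nth_find.
  have Hs : forall s, s < a -> k.+1 * n <= nth 0 l s.
    move=> s Hsa; have := before_find 0 Hsa; rewrite /P.
    have := part_nth_mono _ _ _ Hl (ltnW Hsa); move: Hpa; rewrite /P.
    lia.
  have H3 := @lb3 n l k a j (leq_ltn_trans Hai Hij) Hj Hs.
  move: Hpa HPj; rewrite /P => /andP [Ha1 Ha2] /andP [Hj1 Hj2].
  have Hk : k <= head 0 l.
    have := nth_le_head _ a Hl; have : k <= k * n by rewrite leq_pmulr.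
    lia.
  have Hlow : forall k', k' < k -> a.+1 * n <= mm n l k'.
    move=> k' Hk'; apply: lb1 => //; first by lia.
    have : k'.+1 * n <= k * n by rewrite leq_mul2r Hk' orbT.
    lia.
  have := LB a k Hk Hlow; rewrite Heq.
  move: H3 Ha2 Hj2; rewrite !mulSn.
  set X := k * n; set Y := a * n; lia.
- move=> Hcond; apply: pos_eq.
  + by case/andP: (c_part n (c n l) Hn Hc).
  + by case/andP: Hl.
  apply: ge_sum_eq; last by rewrite sumn_c // sumn_c.
  move=> j; set x := nth 0 l j.
  case: (posnP x) => Hx; first by rewrite Hx.
  have Hj : j < size l by rewrite ltnNge; apply/negP => H; rewrite /x nth_default in Hx.
  have Hdiv := divn_eq x n; have Hmod := ltn_pmod x Hn.
  set q := x %/ n in Hdiv; set r := x %% n in Hdiv Hmod.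
  have Hq : q <= head 0 l.
    have := nth_le_head _ j Hl; rewrite -/x; have := leq_div x n; rewrite -/q; lia.
  have Hlow : forall k', k' < q -> j.+1 * n <= mm n l k'.
    move=> k' Hk'; apply: lb1 => //.
    have : k'.+1 * n <= q * n by rewrite leq_mul2r Hk' orbT.
    lia.
  have := LB j q Hq Hlow.
  case: (posnP r) => Hr; first by lia.
  have Hs : forall s, s < j -> q.+1 * n <= nth 0 l s.
    move=> s Hsj; rewrite leqNgt; apply/negP => Hlt.
    have := Hcond q; rewrite leqNgt => /negP; apply.
    apply: (two_count _ _ _ _ Hsj Hj); apply/andP; split.
    * have := part_nth_mono _ _ _ Hl (ltnW Hsj); rewrite -/x; lia.
    * exact: Hlt.
    * rewrite -/x; lia.
    * rewrite -/x mulSn; lia.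
  have := @lb2 n l q j Hj Hs; rewrite -/x.
  set X := q * n; set Y := j * n; set M := mm n l q; lia.
Qed.
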